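(* Let $(S,K,I)$ be a split graph such that $\Phi(S)$ is simple and complete, with $K=\bigcup_{v\in I}N_S(v)$. Put $\omega=|K|$, $\alpha=|I|$, assume $\alpha\ge2$, and let $U$ be the set of universal vertices of $S$. Then: (1) $S$ is homogeneous; (2) if $d$ is the common degree in $S$ of the vertices of $I$, then $1\le d\le \omega-1$; (3) $|U|\in\{d-1,\ d+1-\alpha\}$; (4) $|U|=d-1$ if and only if $\omega=\alpha+d-1$; (5) $|U|=d+1-\alpha$ if and only if $\omega=d+1$; (6) $\omega=\alpha+|U|$ (in particular $\omega\ge\alpha$); (7) $S$ is active if and only if $U=\varnothing$; (8) if $S$ is active, then $\omega=\alpha$ and $d\in\{1,\omega-1\}$; (9) if $\omega=\alpha$ or $d=1$, then $S$ is active.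
   Context: All graphs are finite and simple. A split graph is a graph $S$ whose vertex set is a disjoint union $V(S)=K\,\dot\cup\,I$ with $K$ a clique and $I$ an independent set; $(K,I)$ is called a bipartition of $S$, and $(S,K,I)$ denotes $S$ together with this fixed bipartition. A 2-switch in a graph $G$ is performed on four distinct vertices $a,b,c,d$ with $ab,cd\in E(G)$ and $ac,bd\notin E(G)$: it deletes $ab,cd$ and adds $ac,bd$; $a,b,c,d$ are said to participate in it. A vertex is active in $G$ if it participates in some 2-switch on $G$; $G$ is active if all its vertices are active. A vertex is universal if it is adjacent to all other vertices. For a split graph $(S,K,I)$ and distinct $u,v\in I$, $\sigma_{uv}(S)$ is the number of induced subgraphs of $S$ isomorphic to $P_4$ containing both $u$ and $v$. The factor graph $\Phi(S)$ is the loopless multigraph with vertex set $I$ having exactly $\sigma_{uv}(S)$ parallel edges between $u$ and $v$; it is simple if $\sigma_{uv}(S)\in\{0,1\}$ for all $u,v$. Graph notions (connected, complete, clique, etc.) applied to $\Phi(S)$ refer to its underlying simple graph, in which $u\sim v$ iff $\sigma_{uv}(S)\ge1$. A vertex $w$ of $(S,K,I)$ is swing if $N_S(w)=K\setminus\{w\}$. $(S,K,I)$ is balanced if $|K|=\omega(S)$ and $|I|=\alpha(S)$; it is known that $S$ is balanced iff it has no swing vertex. $(S,K,I)$ is homogeneous if it is balanced and all vertices of $I$ have the same degree in $S$. *)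

(* Defs.v *)
(* A simple graph on a finite vertex type T is a symmetric,
   irreflexive relation e : rel T (hypotheses in the theorem). *)
From mathcomp Require Import all_boot.
Set Implicit Arguments. Unset Strict Implicit. Unset Printing Implicit Defensive.

Section SplitDefs.
Variable T : finType.
Variable e : rel T.

Definition nbhd (v : T) : {set T} := [set w | e v w].
Definition deg (v : T) : nat := #|nbhd v|.

Definition is_clique (X : {set T}) : bool :=
  [forall x in X, forall y in X, (x != y) ==> e x y].
Definition is_indep (X : {set T}) : bool :=
  [forall x in X, forall y in X, ~~ e x y].

Definition clique_number : nat := \max_(X : {set T} | is_clique X) #|X|.
Definition indep_number : nat := \max_(X : {set T} | is_indep X) #|X|.

Definition split_bipartition (K I : {set T}) : Prop :=
  [/\ K :|: I = setT, K :&: I = set0, is_clique K & is_indep I].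

Definition induces_P4 (X : {set T}) : bool :=
  [exists a, exists b, exists c, exists d,
    [&& X == [set a; b; c; d],
        uniq [:: a; b; c; d],
        e a b, e b c, e c d,
        ~~ e a c, ~~ e a d & ~~ e b d]].

Definition sigma (u v : T) : nat :=
  #|[set X : {set T} | [&& u \in X, v \in X & induces_P4 X]]|.

Definition factor_simple (I : {set T}) : Prop :=
  forall u v, u \in I -> v \in I -> u != v -> sigma u v <= 1.
Definition factor_complete (I : {set T}) : Prop :=
  forall u v, u \in I -> v \in I -> u != v -> 1 <= sigma u v.

Definition two_switch (a b c d : T) : Prop :=
  [/\ uniq [:: a; b; c; d], e a b, e c d, ~~ e a c & ~~ e b d].

Definition is_active_vertex (x : T) : Prop :=
  exists a b c d, two_switch a b c d /\ x \in [:: a; b; c; d].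

Definition is_active_graph : Prop := forall x, is_active_vertex x.

Definition universal_set : {set T} :=
  [set x | [forall y, (y != x) ==> e x y]].

Definition balanced (K I : {set T}) : Prop :=
  #|K| = clique_number /\ #|I| = indep_number.

Definition homogeneous (K I : {set T}) : Prop :=
  balanced K I /\ (forall u v, u \in I -> v \in I -> deg u = deg v).

End SplitDefs.

(* Main.v *)
Require Import Defs.
From mathcomp Require Import all_boot zify.
Set Implicit Arguments. Unset Strict Implicit. Unset Printing Implicit Defensive.

Lemma nbhdE (T : finType) (e : rel T) v w : (w \in nbhd e v) = e v w.
Proof. by rewrite inE. Qed.

Lemma split_facts (T : finType) (e : rel T) (K I : {set T}) :
  split_bipartition e K I ->
  [/\ forall x, x \in I -> x \notin K,
      forall x, x \notin I -> x \in K,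
      forall x y, x \in K -> y \in K -> x != y -> e x y
    & forall x y, x \in I -> y \in I -> ~~ e x y].
Proof.
case=> HU HI /forallP Hc /forallP Hi; split.
- move=> x xI; apply/negP=> xK.
  by have := in_set0 x; rewrite -HI inE xK xI.
- move=> x xI; have : x \in K :|: I by rewrite HU inE.
  by rewrite inE (negbTE xI) orbF.
- move=> x y xK yK xy. have := Hc x; rewrite xK /= => /forallP /(_ y).
  by rewrite yK /= xy.
- move=> x y xI yI. have := Hi x; rewrite xI /= => /forallP /(_ y).
  by rewrite yI.
Qed.

Lemma nbhd_K (T : finType) (e : rel T) (K I : {set T}) :
  split_bipartition e K I -> forall u z, u \in I -> e u z -> z \in K.
Proof.
move=> /split_facts [H1 H2 H3 H4] u z uI euz.
apply: H2; apply/negP=> zI. by have := H4 u z uI zI; rewrite euz.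
Qed.

Lemma P4_mem (T : finType) (e : rel T) (e_sym : symmetric e) (K I : {set T})
  (HS : split_bipartition e K I) u v b c :
  u \in I -> v \in I -> u != v -> e u b -> ~~ e v b -> e v c -> ~~ e u c ->
  [set u; b; c; v] \in [set X : {set T} | [&& u \in X, v \in X & induces_P4 e X]].
Proof.
move=> uI vI uv eub nevb evc neuc.
have [H1 H2 H3 H4] := split_facts HS.
have bK := nbhd_K HS uI eub; have cK := nbhd_K HS vI evc.
have bc : b != c by apply: contraNneq neuc => <-.
have ub : u != b by apply: contraTneq bK => <-; exact: H1.
have uc : u != c by apply: contraTneq cK => <-; exact: H1.
have bv : b != v by apply: contraTneq bK => ->; exact: H1.
have cv : c != v by apply: contraTneq cK => ->; exact: H1.
rewrite inE !inE !eqxx /= orbT /=.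
apply/existsP; exists u; apply/existsP; exists b; apply/existsP; exists c;
apply/existsP; exists v.
rewrite eqxx /= !inE !negb_or ub uc uv bc bv cv eub (H3 _ _ bK cK bc).
by rewrite e_sym evc neuc H4 // e_sym nevb.
Qed.

Lemma P4_ends (T : finType) (e : rel T) (e_sym : symmetric e) (e_irr : irreflexive e) (K I : {set T})
  (HS : split_bipartition e K I) u v (X : {set T}) :
  u \in I -> v \in I -> u != v -> u \in X -> v \in X -> induces_P4 e X ->
  exists b, e u b && ~~ e v b.
Proof.
move=> uI vI uv uX vX /existsP [a /existsP [b /existsP [c /existsP [d]]]].
case/and5P=> /eqP HX Hu eab ebc /and4P [ecd neac nead nebd].
have [H1 H2 H3 H4] := split_facts HS.
have [ac bd] : a != c /\ b != d.
  by move: Hu; rewrite /= !inE !negb_or => /and4P [/and3P [_ -> _] /andP [_ ->] _ _].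
have bI : b \notin I.
  apply/negP=> bI.
  have aK : a \in K by apply: (nbhd_K HS bI); rewrite e_sym.
  have cK : c \in K by apply: (nbhd_K HS bI).
  by have := H3 _ _ aK cK ac; rewrite (negbTE neac).
have cI : c \notin I.
  apply/negP=> cI.
  have bK : b \in K by apply: (nbhd_K HS cI); rewrite e_sym.
  have dK : d \in K by apply: (nbhd_K HS cI).
  by have := H3 _ _ bK dK bd; rewrite (negbTE nebd).
have ends : forall x, x \in I -> x \in X -> (x == a) || (x == d).
  move=> x xI; rewrite HX !inE; case/orP => [/orP [/orP [->//|/eqP xb]|/eqP xc]|->]; rewrite ?orbT //.
  - by move: bI; rewrite -xb xI.
  - by move: cI; rewrite -xc xI.
move: (ends u uI uX) (ends v vI vX) => /orP [/eqP ua|/eqP ud] /orP [/eqP va|/eqP vd].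
- by move: uv; rewrite ua va eqxx.
- by exists b; rewrite ua vd eab e_sym nebd.
- by exists c; rewrite ud va e_sym ecd neac.
- by move: uv; rewrite ud vd eqxx.
Qed.

Lemma diff_pos (T : finType) (e : rel T) (e_sym : symmetric e) (e_irr : irreflexive e)
  (K I : {set T}) (HS : split_bipartition e K I)
  (Hcomplete : factor_complete e I) u v :
  u \in I -> v \in I -> u != v -> exists b, e u b && ~~ e v b.
Proof.
move=> uI vI uv; have := Hcomplete u v uI vI uv.
rewrite /sigma => /card_gt0P [X]; rewrite inE => /and3P [uX vX HX].
exact: (P4_ends e_sym e_irr HS uI vI uv uX vX HX).
Qed.

Lemma diff1 (T : finType) (e : rel T) (e_sym : symmetric e) (e_irr : irreflexive e)
  (K I : {set T}) (HS : split_bipartition e K I)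
  (Hsimple : factor_simple e I) (Hcomplete : factor_complete e I) u v :
  u \in I -> v \in I -> u != v -> #|nbhd e u :\: nbhd e v| = 1.
Proof.
move=> uI vI uv; apply/eqP; rewrite eqn_leq; apply/andP; split; last first.
  have [b /andP [eub nevb]] := diff_pos e_sym e_irr HS Hcomplete uI vI uv.
  by apply/card_gt0P; exists b; rewrite !inE eub nevb.
rewrite leqNgt; apply/negP => /card_gt1P [b [b' [Hb Hb' bb']]].
move: Hb Hb'; rewrite !inE => /andP [nevb eub] /andP [nevb' eub'].
have vu : v != u by rewrite eq_sym.
have [c /andP [evc neuc]] := diff_pos e_sym e_irr HS Hcomplete vI uI vu.
have := Hsimple u v uI vI uv; rewrite /sigma.
set S := [set X : {set T} | _].
have X1 := P4_mem e_sym HS uI vI uv eub nevb evc neuc.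
have X2 := P4_mem e_sym HS uI vI uv eub' nevb' evc neuc.
have [H1 H2 H3 H4] := split_facts HS.
have b'K := nbhd_K HS uI eub'.
have : [set [set u; b; c; v]; [set u; b'; c; v]] \subset S.
  by apply/subsetP => Y; rewrite in_set2 => /orP [] /eqP ->.
move=> /subset_leq_card; rewrite cards2.
suff -> : [set u; b; c; v] != [set u; b'; c; v] by move=> H /(leq_trans H).
apply/negP => /eqP E.
have : b' \in [set u; b; c; v] by rewrite E !inE eqxx !orbT.
rewrite !inE => /orP [/orP [/orP [/eqP bu|/eqP bb]|/eqP bc]|/eqP bv].
- by move: b'K; rewrite bu (negbTE (H1 _ uI)).
- by move: bb'; rewrite bb eqxx.
- by move: neuc; rewrite -bc eub'.
- by move: b'K; rewrite bv (negbTE (H1 _ vI)).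
Qed.

Lemma pick1 (T : finType) (S : {set T}) x0 :
  #|S| = 1 -> forall y, (y \in S) = (y == odflt x0 [pick x in S]).
Proof.
move/eqP/cards1P=> [x ->] y.
case: pickP => [z /set1P -> | /(_ x)]; first by rewrite in_set1.
by rewrite in_set1 eqxx.
Qed.

Lemma count_bij (T : finType) (I S : {set T}) (f : T -> T) :
  {in I &, injective f} -> (forall w, w \in I -> f w \in S) ->
  (forall x, x \in S -> exists2 w, w \in I & x = f w) -> #|S| = #|I|.
Proof.
move=> finj fS Sf.
have <- : f @: I = S.
  apply/setP => x; apply/imsetP/idP => [[w wI ->]|xS]; first exact: fS.
  by have [w wI ->] := Sf x xS; exists w.
exact: card_in_imset.
Qed.

Lemma sub1 (T : finType) (A B : {set T}) x :
  #|A :\: B| = 1 -> x \in A -> x \notin B -> A :\ x \subset B.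
Proof.
move=> H xA xB; apply/subsetP => y; rewrite !inE => /andP [yx yA].
apply/negPn/negP => yB.
move/eqP/cards1P: H => [z Hz].
have : x \in A :\: B by rewrite inE xA xB.
have : y \in A :\: B by rewrite inE yA yB.
by rewrite Hz !inE => /eqP yz /eqP xz; rewrite yz xz eqxx in yx.
Qed.

Lemma dichotomy (T : finType) (I : {set T}) (A : T -> {set T}) (d : nat)
  (HA : forall u v, u \in I -> v \in I -> u != v -> #|A u :\: A v| = 1)
  (Hd : forall u, u \in I -> #|A u| = d) (H2 : 1 < #|I|) :
  #|\bigcup_(v in I) A v| = #|I| + #|\bigcap_(v in I) A v| /\
  (#|\bigcap_(v in I) A v| = d - 1 \/ #|\bigcap_(v in I) A v| + #|I| = d + 1).
Proof.
set K := \bigcup_(v in I) A v; set U := \bigcap_(v in I) A v.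
have [u0 [v0 [u0I v0I uv0]]] := card_gt1P H2.
set C := A u0 :&: A v0.
have HC : #|C| + 1 = d.
  by rewrite -(HA u0 v0 u0I v0I uv0) cardsID Hd.
have AK : forall w, w \in I -> A w \subset K by move=> w wI; exact: bigcup_sup.
have UA : forall w, w \in I -> U \subset A w by move=> w wI; exact: bigcap_inf.
have UK : U \subset K by apply: subset_trans (UA _ u0I) (AK _ u0I).
have cardK : #|K| = #|K :\: U| + #|U|.
  by rewrite -(cardsID U K) (setIidPr UK) addnC.
case: (boolP [forall w in I, C \subset A w]) => [/forall_inP hC | ].
- (* sunflower case *)
  have UC : U = C.
    apply/eqP; rewrite eqEsubset; apply/andP; split.
      by rewrite subsetI !UA.
    apply/subsetP => x xC; apply/bigcapP => w wI.
    exact: (subsetP (hC w wI)).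
  have H1 : forall w, w \in I -> #|A w :\: C| = 1.
    move=> w wI; rewrite cardsD (setIidPr (hC w wI)) Hd //; lia.
  pose f w := odflt w [pick x in A w :\: C].
  have Hf : forall w, w \in I -> forall y, (y \in A w :\: C) = (y == f w).
    by move=> w wI; apply: pick1; apply: H1.
  have fA : forall w, w \in I -> f w \in A w :\: C by move=> w wI; rewrite Hf.
  have cKU : #|K :\: U| = #|I|.
    apply: (@count_bij _ I _ f).
    + move=> w w' wI w'I fE; apply/eqP/negP => /negP ww'.
      have /card_gt0P [y] : 0 < #|A w :\: A w'| by rewrite HA.
      rewrite inE => /andP [yw' yw].
      have yC : y \notin C by apply: contra yw' => yC; exact: (subsetP (hC w' w'I)).
      have : y \in A w :\: C by rewrite inE yC yw.
      rewrite Hf // fE => /eqP yE.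
      by have := fA w' w'I; rewrite inE -yE (negbTE yw') andbF.
    + move=> w wI; have := fA w wI; rewrite inE => /andP [fC fw].
      by rewrite inE UC fC (subsetP (AK w wI)).
    + move=> x; rewrite inE UC => /andP [xC /bigcupP [w wI xw]].
      by exists w => //; apply/eqP; rewrite -Hf // inE xC xw.
  split; first by rewrite cardK cKU.
  by left; rewrite UC; lia.
- (* co-sunflower case *)
  rewrite negb_forall_in => /exists_inP [w1 w1I /subsetPn [c cC cw1]].
  set D := A u0 :|: A v0.
  have HD : #|D| = d + 1.
    rewrite cardsU !Hd //; have := HC; rewrite /C; lia.
  have d1 : 1 <= d by lia.
  have cD : c \in D by move: cC; rewrite !inE => /andP [-> _].
  have Aw1 : A w1 = D :\ c.
    have u0w1 : u0 != w1 by apply: contraNneq cw1 => <-; move: cC; rewrite inE => /andP [].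
    have v0w1 : v0 != w1 by apply: contraNneq cw1 => <-; move: cC; rewrite inE => /andP [].
    have s1 := sub1 (HA _ _ u0I w1I u0w1) (setIP cC).1 cw1.
    have s2 := sub1 (HA _ _ v0I w1I v0w1) (setIP cC).2 cw1.
    apply/eqP; rewrite eq_sym eqEcard; apply/andP; split.
      by rewrite /D setDUl subUset s1 s2.
    by rewrite Hd //; have := cardsD1 c D; rewrite cD HD add1n addn1 => /eqP; rewrite eqSS => /eqP ->.
  have AD : forall w, w \in I -> A w \subset D.
    move=> w wI; apply/subsetP => x xw; apply/negPn/negP => xD.
    move: (xD); rewrite !inE negb_or => /andP [xu0 xv0].
    have wu0 : w != u0 by apply: contraNneq xu0 => <-.
    have wv0 : w != v0 by apply: contraNneq xv0 => <-.
    have s1 := sub1 (HA _ _ wI u0I wu0) xw xu0.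
    have s2 := sub1 (HA _ _ wI v0I wv0) xw xv0.
    have eC : A w :\ x == C.
      rewrite eqEcard subsetI s1 s2 /=.
      by have := cardsD1 x (A w); rewrite xw Hd // add1n => dE; move: HC; rewrite dE addn1 => /eqP; rewrite eqSS => /eqP ->.
    have cw : c \in A w by move: cC; rewrite -(eqP eC) inE => /andP [].
    have ww1 : w != w1 by apply: contraNneq cw1 => <-.
    have := HA w w1 wI w1I ww1.
    have xc : x != c by apply: contraNneq xD => ->.
    have : [set x; c] \subset A w :\: A w1.
      apply/subsetP => y; rewrite !inE => /orP [] /eqP ->; rewrite ?xw ?cw ?cw1 //.
      by rewrite Aw1 in_setD1 (negbTE xD) andbF.
    move=> /subset_leq_card; rewrite cards2 xc => H /eqP; rewrite eqn_leq.
    by move=> /andP [/(leq_trans H)].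
  have KD : K = D.
    apply/eqP; rewrite eqEsubset; apply/andP; split.
      by apply/subsetP => x /bigcupP [w wI xw]; exact: (subsetP (AD w wI)).
    by rewrite subUset !AK.
  have H1 : forall w, w \in I -> #|D :\: A w| = 1.
    move=> w wI; rewrite cardsD (setIidPr (AD w wI)) Hd // HD; lia.
  pose g w := odflt w [pick x in D :\: A w].
  have Hg : forall w, w \in I -> forall y, (y \in D :\: A w) = (y == g w).
    by move=> w wI; apply: pick1; apply: H1.
  have gA : forall w, w \in I -> g w \in D :\: A w by move=> w wI; rewrite Hg.
  have cKU : #|K :\: U| = #|I|.
    apply: (@count_bij _ I _ g).
    + move=> w w' wI w'I gE; apply/eqP/negP => /negP ww'.
      have w'w : w' != w by rewrite eq_sym.
      have /card_gt0P [y] : 0 < #|A w' :\: A w| by rewrite HA.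
      rewrite inE => /andP [yw yw'].
      have : y \in D :\: A w by rewrite inE yw (subsetP (AD w' w'I)).
      rewrite Hg // gE => /eqP yE.
      by have := gA w' w'I; rewrite inE -yE yw'.
    + move=> w wI; have := gA w wI; rewrite inE => /andP [gw gD].
      rewrite inE KD gD andbT; apply/negP => /bigcapP /(_ w wI); exact/negP.
    + move=> x; rewrite inE KD => /andP [xU xD].
      have : ~~ [forall w in I, x \in A w].
        by apply: contra xU => /forall_inP H; apply/bigcapP.
      rewrite negb_forall_in => /exists_inP [w wI xw].
      by exists w => //; apply/eqP; rewrite -Hg // inE xw xD.
  split; first by rewrite cardK cKU.
  by right; move: cardK; rewrite cKU KD HD; lia.
Qed.

Lemma arith (w a u d : nat) : w = a + u -> (u = d-1 \/ u + a = d+1) -> 1 <= d ->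
  d+1 <= w -> 2 <= a ->
  [/\ 1 <= d <= w - 1, (u = d-1 \/ u + a = d+1), (u = d-1 <-> w = a+d-1)
    & (u + a = d+1 <-> w = d+1)] /\
  ((u = 0 -> w = a /\ (d = 1 \/ d = w - 1)) /\ (w = a \/ d = 1 -> u = 0)).
Proof. move=> H1 H2 H3 H4 H5; split; [split|split]; lia. Qed.

Lemma cliqueP (T : finType) (e : rel T) (X : {set T}) :
  is_clique e X -> forall x y, x \in X -> y \in X -> x != y -> e x y.
Proof.
move=> /forallP H x y xX yX xy; have := H x; rewrite xX /= => /forallP /(_ y).
by rewrite yX xy.
Qed.

Lemma indepP (T : finType) (e : rel T) (X : {set T}) :
  is_indep e X -> forall x y, x \in X -> y \in X -> ~~ e x y.
Proof.
move=> /forallP H x y xX yX; have := H x; rewrite xX /= => /forallP /(_ y).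
by rewrite yX.
Qed.

Theorem theorem4p3 (T : finType) (e : rel T)
    (e_sym : symmetric e) (e_irr : irreflexive e)
    (K I : {set T})
    (HS : split_bipartition e K I)
    (Hsimple : factor_simple e I) (Hcomplete : factor_complete e I)
    (HK : K = \bigcup_(v in I) nbhd e v)
    (Halpha : 2 <= #|I|) :
  let omega := #|K| in
  let alpha := #|I| in
  let U := universal_set e in
  [/\ (* (1) *) homogeneous e K I,
      (* (6) *) omega = alpha + #|U|,
      (* (7) *) (is_active_graph e <-> U = set0)
    & forall d : nat, (forall v, v \in I -> deg e v = d) ->
      [/\ (* (2) *) 1 <= d <= omega - 1,
          (* (3) *) #|U| = d - 1 \/ #|U| + alpha = d + 1,
          (* (4) *) (#|U| = d - 1 <-> omega = alpha + d - 1)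
        & (* (5) *) (#|U| + alpha = d + 1 <-> omega = d + 1)] /\
      [/\ (* (8) *) (is_active_graph e -> omega = alpha /\ (d = 1 \/ d = omega - 1))
        & (* (9) *) (omega = alpha \/ d = 1 -> is_active_graph e)]].
Proof.
move=> omega alpha U.
have [H1 H2 H3 H4] := split_facts HS.
have HA : forall u v, u \in I -> v \in I -> u != v -> #|nbhd e u :\: nbhd e v| = 1.
  by move=> u v; apply: (diff1 e_sym e_irr HS Hsimple Hcomplete).
have [u0 [v0 [u0I v0I uv0]]] := card_gt1P Halpha.
pose d0 := #|nbhd e u0|.
have Hd0 : forall u, u \in I -> #|nbhd e u| = d0.
  move=> u uI; rewrite /d0; case: (eqVneq u u0) => [-> //| uu0].
  rewrite -(cardsID (nbhd e u0) (nbhd e u)) -(cardsID (nbhd e u) (nbhd e u0)).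
  by rewrite setIC HA // HA // eq_sym.
have UE : U = \bigcap_(v in I) nbhd e v.
  apply/setP => x; apply/idP/bigcapP.
  - rewrite inE => /forallP Hx v vI.
    have xI : x \notin I.
      apply/negP => xI.
      have [w wx wI] : exists2 w, w != x & w \in I.
        case: (eqVneq x u0) => [xu0|xu0]; last by exists u0; rewrite // eq_sym.
        by exists v0 => //; rewrite xu0 eq_sym.
      by have := Hx w; rewrite wx /= (negbTE (H4 _ _ xI wI)).
    have vx : v != x by apply: contraNneq xI => <-.
    by have := Hx v; rewrite vx /= inE e_sym.
  - move=> Hx; rewrite inE; apply/forallP => y; apply/implyP => yx.
    have xK : x \in K.
      apply: H2; apply/negP => xI; have := Hx x xI.
      by rewrite inE e_irr.
    case: (boolP (y \in I)) => yI; first by have := Hx y yI; rewrite inE e_sym.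
    by rewrite H3 // ?(H2 _ yI) // eq_sym.
have [cardKU dich] := dichotomy HA Hd0 Halpha.
rewrite -HK -UE in cardKU dich.
have d0pos : 1 <= d0.
  by rewrite -(Hd0 u0 u0I) -(HA u0 v0 u0I v0I uv0) subset_leq_card // subsetDl.
have AK : forall v, v \in I -> nbhd e v \subset K.
  by move=> v vI; rewrite HK; exact: bigcup_sup.
have d0K : forall v, v \in I -> #|nbhd e v| + 1 <= #|K|.
  move=> v vI.
  have [w wv wI] : exists2 w, w != v & w \in I.
    case: (eqVneq v u0) => [vu0|vu0]; last by exists u0; rewrite // eq_sym.
    by exists v0 => //; rewrite vu0 eq_sym.
  have /card_gt0P [z] : 0 < #|nbhd e w :\: nbhd e v| by rewrite HA.
  rewrite inE => /andP [zv zw].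
  have zK : z \in K := subsetP (AK w wI) z zw.
  have : nbhd e v \subset K :\ z.
    apply/subsetP => y yv; rewrite in_setD1 (subsetP (AK v vI)) // andbT.
    by apply: contraNneq zv => <-.
  move/subset_leq_card; have := cardsD1 z K; rewrite zK add1n => ->.
  by rewrite addn1 ltnS.
have Hact : is_active_graph e <-> U = set0.
  split.
  - move=> Hx; apply/setP => x; rewrite in_set0; apply/negP; rewrite inE => /forallP Hu.
    have [a [b [c [dd [[Hq eab ecd neac nebd] xin]]]]] := Hx x.
    move: Hq; rewrite /= !inE !negb_or => /and4P [/and3P [ab ac ad] /andP [bc bd] cd _].
    move: xin; rewrite !inE => /orP [/eqP xa|/orP [/eqP xb|/orP [/eqP xc|/eqP xd]]].
    + by have := Hu c; rewrite xa eq_sym ac (negbTE neac).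
    + by have := Hu dd; rewrite xb eq_sym bd (negbTE nebd).
    + by have := Hu a; rewrite xc ac e_sym (negbTE neac).
    + by have := Hu b; rewrite xd bd e_sym (negbTE nebd).
  - move=> U0 x.
    case: (boolP (x \in I)) => xI.
    + have [u ux uI] : exists2 u, u != x & u \in I.
        case: (eqVneq x u0) => [xu0|xu0]; last by exists u0; rewrite // eq_sym.
        by exists v0 => //; rewrite xu0 eq_sym.
      have xu : x != u by rewrite eq_sym.
      have /card_gt0P [b] : 0 < #|nbhd e x :\: nbhd e u| by rewrite HA.
      have /card_gt0P [c] : 0 < #|nbhd e u :\: nbhd e x| by rewrite HA.
      rewrite !inE => /andP [ncx ecu] /andP [nbu ebx].
      have bK := nbhd_K HS xI ebx; have cK := nbhd_K HS uI ecu.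
      exists x, b, c, u; split; last by rewrite inE eqxx.
      split => //; last by rewrite e_sym.
      + rewrite /= !inE !negb_or.
        have xb : x != b by apply: contraTneq bK => <-; exact: H1.
        have xc : x != c by apply: contraTneq cK => <-; exact: H1.
        have bc : b != c by apply: contraNneq ncx => <-.
        have bu : b != u by apply: contraTneq bK => ->; exact: H1.
        have cu : c != u by apply: contraTneq cK => ->; exact: H1.
        by rewrite xb xc xu bc bu cu.
      + by rewrite e_sym.
    + have xK := H2 x xI.
      have : x \notin U by rewrite U0 in_set0.
      rewrite inE negb_forall => /existsP [y]; rewrite negb_imply => /andP [yx nexy].
      have yI : y \in I.
        by apply/negPn/negP => yI; move: nexy; rewrite H3 // ?(H2 _ yI) // eq_sym.
      have [v vI evx] : exists2 v, v \in I & e v x.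
        by move: xK; rewrite HK => /bigcupP [v vI]; rewrite inE; exists v.
      have yv : y != v by apply: contraNneq nexy => ->; rewrite e_sym.
      have /card_gt0P [q] : 0 < #|nbhd e y :\: nbhd e v| by rewrite HA.
      rewrite !inE => /andP [nevq eyq].
      have qK := nbhd_K HS yI eyq.
      exists x, v, y, q; split; last by rewrite inE eqxx.
      split => //; last by rewrite e_sym.
      rewrite /= !inE !negb_or.
      have xv : x != v by apply: contraTneq xK => ->; exact: H1.
      have xq : x != q by apply: contraNneq nexy => ->; rewrite e_sym.
      have vq : v != q by apply: contraTneq qK => <-; exact: H1.
      have yq : y != q by apply: contraTneq qK => <-; exact: H1.
      by rewrite xv eq_sym yx xq eq_sym yv vq yq.
have Hbal : balanced e K I.
  split.
  - apply/eqP; rewrite /clique_number /indep_number eqn_leq; apply/andP; split; last first.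
      apply/bigmax_leqP => X /cliqueP HX.
      case: (boolP (X \subset K)) => [sXK|/subsetPn [v vX vK]]; first exact: subset_leq_card.
      have vI : v \in I by apply/negPn/negP => /H2; rewrite (negbTE vK).
      have : X :\ v \subset nbhd e v.
        apply/subsetP => y; rewrite in_setD1 inE => /andP [yv yX].
        by apply: HX; rewrite // eq_sym.
      move/subset_leq_card; have := cardsD1 v X; rewrite vX add1n => -> H.
      by apply: leq_trans (d0K v vI); rewrite addn1 ltnS.
    by apply: (@leq_bigmax_cond _ _ (fun X : {set T} => #|X|) K); case: HS.
  - apply/eqP; rewrite /clique_number /indep_number eqn_leq; apply/andP; split; last first.
      apply/bigmax_leqP => X /indepP HX.
      case: (boolP (X \subset I)) => [sXI|/subsetPn [w wX wI]]; first exact: subset_leq_card.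
      have wK := H2 w wI.
      have [v vI evw] : exists2 v, v \in I & e v w.
        by move: wK; rewrite HK => /bigcupP [v vI]; rewrite inE; exists v.
      have : X :\ w \subset I :\ v.
        apply/subsetP => y; rewrite !in_setD1 => /andP [yw yX].
        have yI : y \in I.
          apply/negPn/negP => /H2 yK.
          by have := HX w y wX yX; rewrite H3 // eq_sym.
        rewrite yI andbT; apply: contraTneq evw => yvE.
        by rewrite -yvE e_sym HX.
      move/subset_leq_card; have := cardsD1 v I; rewrite vI add1n => ->.
      have := cardsD1 w X; rewrite wX add1n => ->.
      by rewrite ltnS.
    by apply: (@leq_bigmax_cond _ _ (fun X : {set T} => #|X|) I); case: HS.
split => //.
- split => // u v uI vI; rewrite /deg !Hd0 //.
- move=> d Hd.
  have dd0 : d = d0 by rewrite -(Hd u0 u0I).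
  have [[A1 A2 A3 A4] [B1 B2]] :=
    arith cardKU (dich : _) (d0pos : 1 <= d0) (d0K u0 u0I) Halpha.
  rewrite dd0; split; first by split.
  split.
  + move=> /Hact U0; apply: B1; by rewrite U0 cards0.
  + move=> H; apply/Hact; apply/eqP; rewrite -cards_eq0; apply/eqP; exact: B2.
Qed.
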